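(* Let $m\ge1$. The $0/1$ matrices $\mathcal{M}^{t,p}_{i,j}$ ($(i,j,t,p)\in\mathcal{I}_{(m,m)}$), $\mathcal{R}^{t,p}_{i,j}$ ($(i,j,t,p)\in\mathcal{I}_{(m,m+1)}$), $\mathcal{L}^{t,p}_{i,j}$ ($(i,j,t,p)\in\mathcal{I}_{(m+1,m)}$) and $\mathcal{F}^{t,p}_{i,j}$ ($(i,j,t,p)\in\mathcal{I}_{(m+1,m+1)}$) form a basis of the centralizer algebra $\mathcal{A}$, and $\dim\mathcal{A}=4\binom{m+4}{4}$.
   Context: $S=\{1,\dots,2m+1\}$, $X=\binom{S}{m}\cup\binom{S}{m+1}$ (vertex set of the doubled Odd graph $2.O_{m+1}$, in which two vertices are adjacent iff one is a proper subset of the other), $x_0=\{1,\dots,m\}$. $G=\mathrm{Sym}(x_0)\times\mathrm{Sym}(S\setminus x_0)$ (the stabilizer of $x_0$ in $\mathrm{Aut}(2.O_{m+1})$). The centralizer algebra $\mathcal{A}$ is the set of complex matrices $B$ with rows and columns indexed by $X$ such that $B_{\sigma(y),\sigma(z)}=B_{y,z}$ for all $\sigma\in G$, $y,z\in X$. For $y,z\subseteq S$, $\varrho(y,z)=(|x_0\cap y|,|x_0\cap z|,|y\cap z|,|x_0\cap y\cap z|)$; for $a,b\in\{m,m+1\}$, $\mathcal{I}_{(a,b)}=\{\varrho(y,z):y\in\binom{S}{a},z\in\binom{S}{b}\}$ and $X^{(i,j,t,p)}_{(a,b)}=\{(y,z)\in\binom{S}{a}\times\binom{S}{b}:\varrho(y,z)=(i,j,t,p)\}$.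 The matrices $\mathcal{M}^{t,p}_{i,j}$ (type I), $\mathcal{R}^{t,p}_{i,j}$ (type II), $\mathcal{L}^{t,p}_{i,j}$ (type III), $\mathcal{F}^{t,p}_{i,j}$ (type IV) are the $X\times X$ matrices whose $(y,z)$-entry is $1$ if $(y,z)$ lies in $X^{(i,j,t,p)}_{(m,m)}$, $X^{(i,j,t,p)}_{(m,m+1)}$, $X^{(i,j,t,p)}_{(m+1,m)}$, $X^{(i,j,t,p)}_{(m+1,m+1)}$ respectively, and $0$ otherwise. *)

(* Defs.v *)
From HB Require Import structures.
From mathcomp Require Import all_boot all_order all_algebra all_fingroup.
From mathcomp Require Import algC.
Set Implicit Arguments. Unset Strict Implicit. Unset Printing Implicit Defensive.
Import GRing.Theory Num.Theory.
Local Open Scope ring_scope.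

(* S = {1..2m+1} is modelled by 'I_(2*m+1); subsets are {set 'I_(2*m+1)}. *)
Definition Sset (m : nat) := {set 'I_(2 * m + 1)}.

Definition X (m : nat) :=
  {A : {set 'I_(2 * m + 1)} | (#|A| == m) || (#|A| == m.+1)}.

Definition x0 (m : nat) : {set 'I_(2 * m + 1)} := [set i : 'I_(2 * m + 1) | (i < m)%N].

(* G = Sym(x0) x Sym(S \ x0) = permutations of S stabilizing x0 setwise *)
Definition G (m : nat) : {set {perm 'I_(2 * m + 1)}} :=
  [set s : {perm 'I_(2 * m + 1)} | s @: x0 m == x0 m].

Definition rho (m : nat) (y z : {set 'I_(2 * m + 1)}) : nat * nat * nat * nat :=
  (#|x0 m :&: y|, #|x0 m :&: z|, #|y :&: z|, #|x0 m :&: y :&: z|).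

Definition Iset (m a b : nat) : seq (nat * nat * nat * nat) :=
  undup [seq rho y z | y <- enum [set y : {set 'I_(2 * m + 1)} | #|y| == a],
                       z <- enum [set z : {set 'I_(2 * m + 1)} | #|z| == b]].

Definition XMat (m : nat) := {ffun X m * X m -> algC^o}.

Definition in_centralizer (m : nat) (B : XMat m) : Prop :=
  forall s, s \in G m -> forall y z y' z' : X m,
    val y' = s @: val y -> val z' = s @: val z -> B (y', z') = B (y, z).

Definition Emat (m a b : nat) (q : nat * nat * nat * nat) : XMat m :=
  [ffun yz : X m * X m =>
     if [&& #|val yz.1| == a, #|val yz.2| == b & rho (val yz.1) (val yz.2) == q]
     then 1 else 0].

Definition Mmat m q := Emat m m m q.
Definition Rmat m q := Emat m m m.+1 q.
Definition Lmat m q := Emat m m.+1 m q.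
Definition Fmat m q := Emat m m.+1 m.+1 q.

Definition centralizer_family (m : nat) : seq (XMat m) :=
  [seq Mmat m q | q <- Iset m m m] ++ [seq Rmat m q | q <- Iset m m m.+1] ++
  [seq Lmat m q | q <- Iset m m.+1 m] ++ [seq Fmat m q | q <- Iset m m.+1 m.+1].

(* Main.v *)
Require Import Defs.
From HB Require Import structures.
From mathcomp Require Import all_boot all_order all_algebra all_fingroup.
From mathcomp Require Import algC.
From mathcomp Require Import zify.
Set Implicit Arguments. Unset Strict Implicit. Unset Printing Implicit Defensive.

Section Gen.
Variable T : finType.

Lemma card_split (P Q : pred T) :
  #|[pred x | P x && Q x]| + #|[pred x | P x && ~~ Q x]| = #|[pred x | P x]|.
Proof.
rewrite -(cardID [pred x | Q x] [pred x | P x]); congr (_ + _);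
  apply: eq_card => x; rewrite !inE /=; by case: (P x); case: (Q x).
Qed.

Lemma card_count_enum (C : eqType) (f : T -> C) c :
  count_mem c (map f (enum T)) = #|[pred x | f x == c]|.
Proof.
rewrite count_map cardE /enum_mem size_filter (@eq_filter _ _ predT) // filter_predT.
apply: eq_count => x.
by rewrite !inE.
Qed.

Lemma color_perm (C : finType) (f g : T -> C) :
  (forall c, #|[pred x | f x == c]| = #|[pred x | g x == c]|) ->
  exists s : {perm T}, forall x, g (s x) = f x.
Proof.
move=> H.
pose r : rel C := fun a b => (enum_rank a <= enum_rank b)%N.
have r_tot : total r by move=> a b; apply: leq_total.
have r_tr : transitive r by move=> a b c; apply: leq_trans.
have r_as : antisymmetric r.
  move=> a b /andP[h1 h2]; apply: enum_rank_inj; apply: val_inj; apply/eqP.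
  by rewrite eqn_leq; apply/andP; split.
have pe : perm_eq (map f (enum T)) (map g (enum T)).
  apply/allP => c _ /=; have := card_count_enum f c; have := card_count_enum g c; move=> -> ->; by rewrite H.
have se := perm_sortP r_tot r_tr r_as _ _ pe.
pose L1 := sort (relpre f r) (enum T); pose L2 := sort (relpre g r) (enum T).
have {se} se : map f L1 = map g L2 by rewrite -!sort_map.
have p1 : perm_eq L1 (enum T) by rewrite perm_sort.
have p2 : perm_eq L2 (enum T) by rewrite perm_sort.
have u2 : uniq L2 by rewrite (perm_uniq p2) enum_uniq.
have s12 : size L1 = size L2 by rewrite (perm_size p1) (perm_size p2).
have inL1 : forall x, x \in L1 by move=> x; rewrite (perm_mem p1) mem_enum.
pose s0 := fun x => nth x L2 (index x L1).
have s0_inj : injective s0.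
  move=> x y; rewrite /s0.
  have hx : index x L1 < size L2 by rewrite -s12 index_mem.
  have hy : index y L1 < size L2 by rewrite -s12 index_mem.
  rewrite (set_nth_default y) // => /eqP; rewrite nth_uniq // => /eqP e.
  by rewrite -(nth_index x (inL1 x)) -(nth_index x (inL1 y)) e.
exists (perm s0_inj) => x; rewrite permE /s0.
have hx : index x L1 < size L2 by rewrite -s12 index_mem.
rewrite -(nth_map x (g x) g hx) -se (nth_map x (g x) f) ?s12 //.
by rewrite nth_index.
Qed.

Lemma imset_perm_eq (s : {perm T}) (A B : {set T}) :
  (forall x, (s x \in B) = (x \in A)) -> s @: A = B.
Proof.
move=> H; apply/setP => w; apply/imsetP/idP => [[x hx ->]|hw].
  by rewrite H.
by exists ((s^-1)%g w); rewrite ?permKV // -H permKV.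
Qed.

End Gen.
Section Cnt.
Variable T : finType.


Lemma card_split' (P Q R1 R2 R : pred T) : (forall x, R1 x = P x && Q x) ->
  (forall x, R2 x = P x && ~~ Q x) -> (forall x, R x = P x) ->
  #|[pred x | R1 x]| + #|[pred x | R2 x]| = #|[pred x | R x]|.
Proof.
move=> h1 h2 h.
transitivity (#|[pred x | P x && Q x]| + #|[pred x | P x && ~~ Q x]|).
  by congr (_ + _); apply: eq_card => x; rewrite !inE /= ?h1 ?h2.
by rewrite card_split; apply: eq_card => x; rewrite !inE /= h.
Qed.

Definition sel (o : option bool) (b : bool) := if o is Some c then b == c else true.
Definition ss (o : option bool) (A : {set T}) := if o is Some _ then A else setT.

Definition cnt (A B C : {set T}) o1 o2 o3 :=
  #|[pred x | sel o1 (x \in A) && sel o2 (x \in B) && sel o3 (x \in C)]|.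

Lemma cnt_split3 A B C o1 o2 :
  cnt A B C o1 o2 (Some true) + cnt A B C o1 o2 (Some false) = cnt A B C o1 o2 None.
Proof.
rewrite /cnt; apply: (@card_split' (fun x => sel o1 (x \in A) && sel o2 (x \in B)) (fun x => x \in C)) => x /=;
  by case: (sel _ _); case: (sel _ _); case: (x \in C).
Qed.

Lemma cnt_split2 A B C o1 o3 :
  cnt A B C o1 (Some true) o3 + cnt A B C o1 (Some false) o3 = cnt A B C o1 None o3.
Proof.
rewrite /cnt; apply: (@card_split' (fun x => sel o1 (x \in A) && sel o3 (x \in C)) (fun x => x \in B)) => x /=;
  by case: (sel _ _); case: (sel _ _); case: (x \in B).
Qed.

Lemma cnt_split1 A B C o2 o3 :
  cnt A B C (Some true) o2 o3 + cnt A B C (Some false) o2 o3 = cnt A B C None o2 o3.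
Proof.
rewrite /cnt; apply: (@card_split' (fun x => sel o2 (x \in B) && sel o3 (x \in C)) (fun x => x \in A)) => x /=;
  by case: (sel _ _); case: (sel _ _); case: (x \in A).
Qed.

Lemma cnt_pos A B C o1 o2 o3 :
  o1 != Some false -> o2 != Some false -> o3 != Some false ->
  cnt A B C o1 o2 o3 = #|ss o1 A :&: ss o2 B :&: ss o3 C|.
Proof.
move=> h1 h2 h3; rewrite /cnt.
by case: o1 h1 => [[]|] // _; case: o2 h2 => [[]|] // _; case: o3 h3 => [[]|] // _;
  apply: eq_card => x; rewrite !inE /= ?eqb_id ?andbT ?in_setT.
Qed.

Lemma cnt_eq (A B C A' B' C' : {set T}) :
  #|A| = #|A'| -> #|B| = #|B'| -> #|C| = #|C'| ->
  #|A :&: B| = #|A' :&: B'| -> #|A :&: C| = #|A' :&: C'| ->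
  #|B :&: C| = #|B' :&: C'| -> #|A :&: B :&: C| = #|A' :&: B' :&: C'| ->
  forall o1 o2 o3, cnt A B C o1 o2 o3 = cnt A' B' C' o1 o2 o3.
Proof.
move=> hA hB hC hAB hAC hBC hABC.
have pos : forall o1 o2 o3, o1 != Some false -> o2 != Some false -> o3 != Some false ->
    cnt A B C o1 o2 o3 = cnt A' B' C' o1 o2 o3.
  move=> o1 o2 o3 h1 h2 h3; rewrite !cnt_pos //.
  by case: o1 h1 => [[]|] // _; case: o2 h2 => [[]|] // _; case: o3 h3 => [[]|] // _;
    rewrite /= ?setIT ?setTI ?setIT.
have s3 : forall o1 o2 o3, o1 != Some false -> o2 != Some false ->
    cnt A B C o1 o2 o3 = cnt A' B' C' o1 o2 o3.
  move=> o1 o2 [[]|] h1 h2; try by apply: pos.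
  have := cnt_split3 A B C o1 o2; have := cnt_split3 A' B' C' o1 o2.
  rewrite (pos o1 o2 (Some true)) // (pos o1 o2 None) // => e1 e2.
  by apply: (@addnI (cnt A' B' C' o1 o2 (Some true))); rewrite e2 e1.
have s2 : forall o1 o2 o3, o1 != Some false ->
    cnt A B C o1 o2 o3 = cnt A' B' C' o1 o2 o3.
  move=> o1 [[]|] o3 h1; try by apply: s3.
  have := cnt_split2 A B C o1 o3; have := cnt_split2 A' B' C' o1 o3.
  rewrite (s3 o1 (Some true) o3) // (s3 o1 None o3) // => e1 e2.
  by apply: (@addnI (cnt A' B' C' o1 (Some true) o3)); rewrite e2 e1.
move=> [[]|] o2 o3; try by apply: s2.
have := cnt_split1 A B C o2 o3; have := cnt_split1 A' B' C' o2 o3.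
rewrite (s2 (Some true) o2 o3) // (s2 None o2 o3) // => e1 e2.
by apply: (@addnI (cnt A' B' C' (Some true) o2 o3)); rewrite e2 e1.
Qed.

End Cnt.

Lemma orbit_trans (T : finType) (A B C B' C' : {set T}) :
  #|B| = #|B'| -> #|C| = #|C'| ->
  #|A :&: B| = #|A :&: B'| -> #|A :&: C| = #|A :&: C'| ->
  #|B :&: C| = #|B' :&: C'| -> #|A :&: B :&: C| = #|A :&: B' :&: C'| ->
  exists s : {perm T}, [/\ s @: A = A, s @: B = B' & s @: C = C'].
Proof.
move=> hB hC hAB hAC hBC hABC.
have := @cnt_eq T A B C A B' C' erefl hB hC hAB hAC hBC hABC => H.
have cp : forall c, #|[pred x | (x \in A, x \in B, x \in C) == c]| =
                    #|[pred x | (x \in A, x \in B', x \in C') == c]|.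
  move=> [[b1 b2] b3].
  rewrite (_ : #|_| = cnt A B C (Some b1) (Some b2) (Some b3)); last first.
    apply: eq_card => x; rewrite !inE /=.
    by case: (x \in A); case: (x \in B); case: (x \in C); case: b1; case: b2; case: b3.
  rewrite H; apply: eq_card => x; rewrite !inE /=.
  by case: (x \in A); case: (x \in B'); case: (x \in C'); case: b1; case: b2; case: b3.
have [s hs] := color_perm cp.
exists s; split; apply: imset_perm_eq => x; have := hs x; case=> //.
Qed.
Ltac seteq := apply/setP => ?; rewrite !inE;
  repeat match goal with |- context [?x \in ?A] => case: (x \in A) end; done.
Ltac subs := apply/subsetP => ?; rewrite !inE; apply/implyP;
  repeat match goal with |- context [?x \in ?A] => case: (x \in A) end; done.

Section Ineq.
Variable T : finType.
Variables (X y z : {set T}) (m : nat).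
Hypotheses (hT : #|T| = 2 * m + 1) (hX : #|X| = m) (hy : #|y| = m) (hz : #|z| = m).

Lemma ineqs :
  let i := #|X :&: y| in let j := #|X :&: z| in let t := #|y :&: z| in
  let p := #|X :&: y :&: z| in
  [/\ p <= i, p <= j, p <= t, i + j <= m + p &
   [/\ i + t <= m + p, j + t <= m + p & m + p <= 1 + i + j + t]].
Proof.
move=> i j t p.
have pi : p <= i by apply: subset_leq_card; subs.
have pj : p <= j by apply: subset_leq_card; subs.
have pt : p <= t by apply: subset_leq_card; subs.
have ij : i + j <= m + p.
  have := cardsUI (X :&: y) (X :&: z).
  have -> : X :&: y :&: (X :&: z) = X :&: y :&: z by seteq.
  have : #|X :&: y :|: X :&: z| <= #|X| by apply: subset_leq_card; subs.
  rewrite -/i -/j -/p; lia.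
have it : i + t <= m + p.
  have := cardsUI (X :&: y) (y :&: z).
  have -> : X :&: y :&: (y :&: z) = X :&: y :&: z by seteq.
  have : #|X :&: y :|: y :&: z| <= #|y| by apply: subset_leq_card; subs.
  rewrite -/i -/t -/p; lia.
have jt : j + t <= m + p.
  have := cardsUI (X :&: z) (y :&: z).
  have -> : X :&: z :&: (y :&: z) = X :&: y :&: z by seteq.
  have : #|X :&: z :|: y :&: z| <= #|z| by apply: subset_leq_card; subs.
  rewrite -/j -/t -/p; lia.
have last : m + p <= 1 + i + j + t.
  have h1 := cardsUI X y.
  have h2 := cardsUI (X :|: y) z.
  have h3 := cardsUI (X :&: z) (y :&: z).
  rewrite (_ : (X :|: y) :&: z = X :&: z :|: y :&: z) in h2; last by seteq.
  rewrite (_ : X :&: z :&: (y :&: z) = X :&: y :&: z) in h3; last by seteq.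
  have h4 : #|X :|: y :|: z| <= 2 * m + 1 by rewrite -hT max_card.
  move: h1 h2 h3 h4; rewrite -/i -/j -/t -/p; lia.
by split.
Qed.

End Ineq.

Section Flip.
Variable T : finType.
Lemma cardIC (A B : {set T}) : #|A :&: ~: B| = #|A| - #|A :&: B|.
Proof. rewrite -setDE; have := cardsID B A; lia. Qed.

Variables (X y z : {set T}).
Lemma flipz :
  (#|X :&: y|, #|X :&: ~: z|, #|y :&: ~: z|, #|X :&: y :&: ~: z|) =
  (#|X :&: y|, #|X| - #|X :&: z|, #|y| - #|y :&: z|, #|X :&: y| - #|X :&: y :&: z|).
Proof. by rewrite !cardIC. Qed.

Lemma flipy :
  (#|X :&: ~: y|, #|X :&: z|, #|~: y :&: z|, #|X :&: ~: y :&: z|) =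
  (#|X| - #|X :&: y|, #|X :&: z|, #|z| - #|y :&: z|, #|X :&: z| - #|X :&: y :&: z|).
Proof.
have -> : ~: y :&: z = z :&: ~: y by rewrite setIC.
have -> : X :&: ~: y :&: z = X :&: z :&: ~: y by seteq.
rewrite !cardIC (setIC z y) -setIA (setIC z y) setIA //.
Qed.
End Flip.
Lemma card_ord_pred n (P : nat -> bool) : #|[set i : 'I_n | P i]| = count P (iota 0 n).
Proof.
rewrite -val_ord_enum count_map cardsE cardE /enum_mem size_filter unlock /=.
by apply: eq_count.
Qed.

Lemma card_ord_pred' n (A : {set 'I_n}) (P : nat -> bool) :
  (forall i : 'I_n, (i \in A) = P i) -> #|A| = count P (iota 0 n).
Proof.
move=> h; rewrite -card_ord_pred; apply: eq_card => i; by rewrite !inE h.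
Qed.

Lemma count_segT (P : nat -> bool) a n :
  (forall k, a <= k < a + n -> P k) -> count P (iota a n) = n.
Proof.
elim: n a => [|n IH] a h //=.
rewrite h ?IH; [lia| |lia].
move=> k hk; apply: h; lia.
Qed.

Lemma count_segF (P : nat -> bool) a n :
  (forall k, a <= k < a + n -> ~~ P k) -> count P (iota a n) = 0.
Proof.
elim: n a => [|n IH] a h //=.
rewrite (negbTE (h a _)) ?IH //=; [|lia].
move=> k hk; apply: h; lia.
Qed.

Ltac segs :=
  repeat rewrite iotaD count_cat;
  repeat match goal with |- context [count ?P (iota ?a ?n)] =>
    first [ rewrite (@count_segT P a n); [| move=> k /andP [hk1 hk2]; rewrite /=; lia]
          | rewrite (@count_segF P a n); [| move=> k /andP [hk1 hk2]; rewrite /=; lia] ]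
  end.

Lemma card_x0 m : #|x0 m| = m.
Proof.
rewrite /x0 (card_ord_pred _ (fun k => k < m)) (_ : 2 * m + 1 = m + (m + 1)); last lia.
segs; lia.
Qed.

Lemma realize m (n111 n110 n101 n100 n011 n010 n001 n000 : nat) :
  n111 + n110 + n101 + n100 = m -> n011 + n010 + n001 + n000 = m.+1 ->
  exists y z : {set 'I_(2 * m + 1)},
    [/\ #|y| = n111 + n110 + n011 + n010, #|z| = n111 + n101 + n011 + n001 &
        rho y z = (n111 + n110, n111 + n101, n111 + n011, n111)].
Proof.
move=> hin hout.
pose Py := fun k : nat => (k < n111 + n110) || (m <= k < m + n011 + n010).
pose Pz := fun k : nat => [|| k < n111, n111 + n110 <= k < n111 + n110 + n101,
                          m <= k < m + n011 | m + n011 + n010 <= k < m + n011 + n010 + n001].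
exists [set k : 'I_(2 * m + 1) | Py k], [set k : 'I_(2 * m + 1) | Pz k].
have eN : 2 * m + 1 = n111 + (n110 + (n101 + (n100 + (n011 + (n010 + (n001 + n000)))))) by lia.
split.
- rewrite (@card_ord_pred' _ _ Py); last by move=> i; rewrite inE.
  rewrite eN /Py; segs; lia.
- rewrite (@card_ord_pred' _ _ Pz); last by move=> i; rewrite inE.
  rewrite eN /Pz; segs; lia.
rewrite /rho /x0; congr (_, _, _, _).
- rewrite (@card_ord_pred' _ _ (fun k => (k < m) && Py k)); last by move=> i; rewrite !inE.
  rewrite eN /Py; segs; lia.
- rewrite (@card_ord_pred' _ _ (fun k => (k < m) && Pz k)); last by move=> i; rewrite !inE.
  rewrite eN /Pz; segs; lia.
- rewrite (@card_ord_pred' _ _ (fun k => Py k && Pz k)); last by move=> i; rewrite !inE.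
  rewrite eN /Py /Pz; segs; lia.
- rewrite (@card_ord_pred' _ _ (fun k => (k < m) && Py k && Pz k)); last by move=> i; rewrite !inE.
  rewrite eN /Py /Pz; segs; lia.
Qed.

Definition psiL (m : nat) (s : seq nat) : nat * nat * nat * nat :=
  let e2 := nth 0 s 0 in let e3 := nth 0 s 1 in let e4 := nth 0 s 2 in
  let e5 := nth 0 s 3 in let e1 := m - (e2 + e3 + e4 + e5) in
  if odd e5 then (e1 + half e5 + e2, e1 + half e5 + e3, e1 + half e5 + e4, e1 + half e5)
  else (e1 + half e5 + e2, e1 + half e5 + e3, e1 + half e5 + e4, e1).

Definition CompSet m := [set t : 4.-tuple 'I_m.+1 | \sum_(i <- t) i <= m].
Definition psiT m (t : 4.-tuple 'I_m.+1) := psiL m (map (fun i : 'I_m.+1 => nat_of_ord i) t).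

Lemma tuple4 m (t : 4.-tuple 'I_m.+1) : exists a b c d : 'I_m.+1, t = [tuple a; b; c; d].
Proof.
case: t => [[|a [|b [|c [|d [|]]]]] //= st]; exists a, b, c, d; exact: val_inj.
Qed.

Lemma CompSet4 m (a b c d : 'I_m.+1) :
  ([tuple a; b; c; d] \in CompSet m) = (a + b + c + d <= m).
Proof. by rewrite inE /= !big_cons big_nil !addnA addn0. Qed.

Lemma card_T m : #|'I_(2 * m + 1)| = 2 * m + 1.
Proof. exact: card_ord. Qed.

Lemma cardC_T m (A : {set 'I_(2 * m + 1)}) : #|~: A| = 2 * m + 1 - #|A|.
Proof. have := cardsC A; rewrite card_ord; lia. Qed.

Lemma base_real m t : t \in CompSet m ->
  exists y z : {set 'I_(2 * m + 1)}, [/\ #|y| = m, #|z| = m & rho y z = psiT t].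
Proof.
have [a [b [c [d ->]]]] := tuple4 t; rewrite CompSet4 => hs.
rewrite /psiT /psiL /=.
have hd := odd_double_half d.
case: ifP => od; rewrite od /= in hd.
- have [y [z [hy hz hr]]] := @realize m ((m - (a + b + c + d)) + half d) a b (c + half d + 1) c (b + half d + 1)
     (a + half d + 1) (m - (a + b + c + d)) ltac:(lia) ltac:(lia).
  exists y, z; split; [rewrite hy; lia| rewrite hz; lia|]; rewrite hr; congr (_, _, _, _); lia.
- have [y [z [hy hz hr]]] := @realize m (m - (a + b + c + d)) (a + half d) (b + half d) c (c + half d) b
     a ((m - (a + b + c + d)) + half d + 1) ltac:(lia) ltac:(lia).
  exists y, z; split; [rewrite hy; lia| rewrite hz; lia|]; rewrite hr; congr (_, _, _, _); lia.
Qed.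

Lemma base_anal m (y z : {set 'I_(2 * m + 1)}) : #|y| = m -> #|z| = m ->
  exists2 t, t \in CompSet m & rho y z = psiT t.
Proof.
move=> hy hz.
have := ineqs (card_T m) (card_x0 m) hy hz.
rewrite /rho.
set i := #|x0 m :&: y|; set j := #|x0 m :&: z|; set t := #|y :&: z|;
  set p := #|x0 m :&: y :&: z|.
move=> [h1 h2 h3 h4 [h5 h6 h7]].
case: (leqP (m + 2 * p) (i + j + t)) => hc.
- exists ([tuple inord (m + p - j - t); inord (m + p - i - t); inord (m + p - i - j);
                inord (2 * (i + j + t - m - 2 * p))] : 4.-tuple 'I_m.+1).
    rewrite CompSet4 !inordK; lia.
  rewrite /psiT /psiL /= !inordK; try lia.
  case: ifP => od; congr (_, _, _, _); lia.
- exists ([tuple inord (i - p); inord (j - p); inord (t - p);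
                inord (2 * (m + 2 * p - (i + j + t)) - 1)] : 4.-tuple 'I_m.+1).
    rewrite CompSet4 !inordK; lia.
  rewrite /psiT /psiL /= !inordK; try lia.
  case: ifP => od; congr (_, _, _, _); lia.
Qed.

Definition tauz m a (q : nat * nat * nat * nat) :=
  let: (i, j, t, p) := q in (i, m - j, a - t, i - p).
Definition tauy m b (q : nat * nat * nat * nat) :=
  let: (i, j, t, p) := q in (m - i, j, b - t, j - p).

Lemma rho_Cz m (y z : {set 'I_(2 * m + 1)}) : rho y (~: z) = tauz m #|y| (rho y z).
Proof. by rewrite /rho /tauz flipz card_x0. Qed.

Lemma rho_Cy m (y z : {set 'I_(2 * m + 1)}) : rho (~: y) z = tauy m #|z| (rho y z).
Proof. by rewrite /rho /tauy flipy card_x0. Qed.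

Lemma IsetP m a b q : q \in Iset m a b <->
  exists y z : {set 'I_(2 * m + 1)}, [/\ #|y| = a, #|z| = b & rho y z = q].
Proof.
rewrite /Iset mem_undup; split.
  case/allpairsP => [[y z] [/= hy hz ->]]; exists y, z.
  by move: hy hz; rewrite !mem_enum !inE => /eqP -> /eqP ->.
move=> [y [z [hy hz <-]]]; apply/allpairsP; exists (y, z) => /=.
by rewrite !mem_enum !inE hy hz !eqxx.
Qed.

Definition F1 m (t : 4.-tuple 'I_m.+1) := psiT t.
Definition F2 m (t : 4.-tuple 'I_m.+1) := tauz m m (psiT t).
Definition F3 m (t : 4.-tuple 'I_m.+1) := tauy m m (psiT t).
Definition F4 m (t : 4.-tuple 'I_m.+1) := tauy m m.+1 (tauz m m (psiT t)).

Lemma char1 m q : q \in Iset m m m <-> exists2 t, t \in CompSet m & q = F1 t.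
Proof.
split.
  by move/IsetP => [y [z [hy hz <-]]]; exact: base_anal.
move=> [t ht ->]; apply/IsetP; have [y [z [hy hz hr]]] := base_real ht.
by exists y, z.
Qed.

Lemma char2 m q : q \in Iset m m m.+1 <-> exists2 t, t \in CompSet m & q = F2 t.
Proof.
split.
  move/IsetP => [y [z [hy hz <-]]].
  have hz' : #|~: z| = m by rewrite cardC_T hz; lia.
  have [t ht e] := base_anal hy hz'; exists t => //.
  have := rho_Cz y (~: z); rewrite setCK hy => ->.
  by rewrite e.
move=> [t ht ->]; apply/IsetP; have [y [z [hy hz hr]]] := base_real ht.
exists y, (~: z); split => //; first by rewrite cardC_T hz; lia.
by rewrite rho_Cz hy hr.
Qed.

Lemma char3 m q : q \in Iset m m.+1 m <-> exists2 t, t \in CompSet m & q = F3 t.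
Proof.
split.
  move/IsetP => [y [z [hy hz <-]]].
  have hy' : #|~: y| = m by rewrite cardC_T hy; lia.
  have [t ht e] := base_anal hy' hz; exists t => //.
  have := rho_Cy (~: y) z; rewrite setCK hz => ->.
  by rewrite e.
move=> [t ht ->]; apply/IsetP; have [y [z [hy hz hr]]] := base_real ht.
exists (~: y), z; split => //; first by rewrite cardC_T hy; lia.
by rewrite rho_Cy hz hr.
Qed.

Lemma char4 m q : q \in Iset m m.+1 m.+1 <-> exists2 t, t \in CompSet m & q = F4 t.
Proof.
split.
  move/IsetP => [y [z [hy hz <-]]].
  have hy' : #|~: y| = m by rewrite cardC_T hy; lia.
  have hz' : #|~: z| = m by rewrite cardC_T hz; lia.
  have [t ht e] := base_anal hy' hz'; exists t => //.
  have := rho_Cy (~: y) z; rewrite setCK hz => ->.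
  have := rho_Cz (~: y) (~: z); rewrite setCK hy' => ->.
  by rewrite e.
move=> [t ht ->]; apply/IsetP; have [y [z [hy hz hr]]] := base_real ht.
exists (~: y), (~: z); split => //; try by rewrite cardC_T ?hy ?hz; lia.
by rewrite rho_Cy cardC_T hz rho_Cz hy hr (_ : 2 * m + 1 - m = m.+1) //; lia.
Qed.

Lemma injF m (F : 4.-tuple 'I_m.+1 -> nat * nat * nat * nat) :
  (forall a b c d a' b' c' d' : 'I_m.+1, a + b + c + d <= m -> a' + b' + c' + d' <= m ->
     F [tuple a; b; c; d] = F [tuple a'; b'; c'; d'] ->
     [/\ a = a' :> nat, b = b' :> nat, c = c' :> nat & d = d' :> nat]) ->
  {in CompSet m &, injective F}.
Proof.
move=> H t1 t2; have [a [b [c [d ->]]]] := tuple4 t1; have [a' [b' [c' [d' ->]]]] := tuple4 t2.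
rewrite !CompSet4 => h1 h2 /H [] // e1 e2 e3 e4.
by apply: val_inj => /=; congr [:: _; _; _; _]; apply: val_inj.
Qed.

Lemma inj1 m : {in CompSet m &, injective (@F1 m)}.
Proof.
apply: injF => a b c d a' b' c' d' h1 h2.
rewrite /F1 /psiT /psiL /=.
have := odd_double_half d; have := odd_double_half d'.
case: (odd d); case: (odd d') => /= hd hd' [e1 e2 e3 e4]; split; lia.
Qed.

Lemma ineqs_rho m (y z : {set 'I_(2 * m + 1)}) : #|y| = m -> #|z| = m ->
  let: (i, j, t, p) := rho y z in
  [/\ p <= i, p <= j, p <= t, i + j <= m + p &
   [/\ i + t <= m + p, j + t <= m + p & m + p <= 1 + i + j + t]].
Proof. move=> hy hz; exact: (ineqs (card_T m) (card_x0 m) hy hz). Qed.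

Lemma psi_ineqs m t : t \in CompSet m ->
  let: (i, j, k, p) := psiT t in
  [/\ i <= m, j <= m, k <= m, p <= i & [/\ p <= j & i + j <= m + p]].
Proof.
move=> ht; have [y [z [hy hz <-]]] := base_real ht.
move: (ineqs_rho hy hz); rewrite /rho.
move: #|x0 m :&: y :&: z| #|x0 m :&: y| #|x0 m :&: z| #|y :&: z| => p i j k.
move=> [h1 h2 h3 h4 [h5 h6 h7]]; split; [lia|lia|lia|lia|split; lia].
Qed.

Lemma inj2 m : {in CompSet m &, injective (@F2 m)}.
Proof.
move=> t1 t2 h1 h2 e; apply: inj1 => //; move: e (psi_ineqs h1) (psi_ineqs h2).
rewrite /F1 /F2 /tauz; case: (psiT t1) => [[[i1 j1] k1] p1]; case: (psiT t2) => [[[i2 j2] k2] p2].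
move=> [e1 e2 e3 e4] [a1 a2 a3 a4 [a5 a6]] [b1 b2 b3 b4 [b5 b6]].
have ej : j1 = j2 by clear -e2 a2 b2; lia.
have ek : k1 = k2 by clear -e3 a3 b3; lia.
have ep : p1 = p2 by clear -e1 e4 a4 b4; lia.
by rewrite e1 ej ek ep.
Qed.

Lemma inj3 m : {in CompSet m &, injective (@F3 m)}.
Proof.
move=> t1 t2 h1 h2 e; apply: inj1 => //; move: e (psi_ineqs h1) (psi_ineqs h2).
rewrite /F1 /F3 /tauy; case: (psiT t1) => [[[i1 j1] k1] p1]; case: (psiT t2) => [[[i2 j2] k2] p2].
move=> [e1 e2 e3 e4] [a1 a2 a3 a4 [a5 a6]] [b1 b2 b3 b4 [b5 b6]].
have ei : i1 = i2 by clear -e1 a1 b1; lia.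
have ek : k1 = k2 by clear -e3 a3 b3; lia.
have ep : p1 = p2 by clear -e2 e4 a5 b5; lia.
by rewrite ei e2 ek ep.
Qed.

Lemma inj4 m : {in CompSet m &, injective (@F4 m)}.
Proof.
move=> t1 t2 h1 h2 e; apply: inj1 => //; move: e (psi_ineqs h1) (psi_ineqs h2).
rewrite /F1 /F4 /tauy /tauz; case: (psiT t1) => [[[i1 j1] k1] p1]; case: (psiT t2) => [[[i2 j2] k2] p2].
move=> [e1 e2 e3 e4] [a1 a2 a3 a4 [a5 a6]] [b1 b2 b3 b4 [b5 b6]].
have ei : i1 = i2 by clear -e1 a1 b1; lia.
have ej : j1 = j2 by clear -e2 a2 b2; lia.
have ek : k1 = k2 by clear -e3 a3 b3; lia.
rewrite -ei -ej in e4 b4 b6.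
have ep : p1 = p2 by clear -e4 a4 b4 a6 b6; lia.
by rewrite ei ej ek ep.
Qed.

Lemma size_Iset m a b (F : 4.-tuple 'I_m.+1 -> nat * nat * nat * nat) :
  (forall q, q \in Iset m a b <-> exists2 t, t \in CompSet m & q = F t) ->
  {in CompSet m &, injective F} -> size (Iset m a b) = 'C(m + 4, 4).
Proof.
move=> H Hi.
have e : size (Iset m a b) = size (undup (map F (enum (CompSet m)))).
  apply: perm_size; apply: uniq_perm; [exact: undup_uniq | exact: undup_uniq |].
  move=> q; rewrite [q \in undup (map _ _)]mem_undup; apply/idP/idP.
    move/H => [t ht ->]; apply: map_f; by rewrite mem_enum.
  case/mapP => t; rewrite mem_enum => ht ->; apply/H; by exists t.
rewrite e undup_id; last by rewrite map_inj_in_uniq ?enum_uniq // => x y; rewrite !mem_enum; apply: Hi.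
rewrite size_map -cardE /CompSet card_partial_ord_partitions addnC //.
Qed.

Lemma sizes m : size (Iset m m m) + size (Iset m m m.+1) + size (Iset m m.+1 m)
  + size (Iset m m.+1 m.+1) = 4 * 'C(m + 4, 4).
Proof.
rewrite (size_Iset (@char1 m) (@inj1 m)) (size_Iset (@char2 m) (@inj2 m)).
rewrite (size_Iset (@char3 m) (@inj3 m)) (size_Iset (@char4 m) (@inj4 m)); lia.
Qed.
Import GRing.Theory.
Local Open Scope ring_scope.

Section Lin.
Variable m : nat.

Definition key (yz : X m * X m) : nat * nat * (nat * nat * nat * nat) :=
  (#|val yz.1|, #|val yz.2|, rho (val yz.1) (val yz.2)).

Definition E (k : nat * nat * (nat * nat * nat * nat)) : XMat m :=
  [ffun yz => if key yz == k then 1 else 0].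

Lemma Emat_E a b q : Emat m a b q = E (a, b, q).
Proof. by apply/ffunP => yz; rewrite !ffunE /key !xpair_eqE andbA. Qed.

Definition keys : seq (nat * nat * (nat * nat * nat * nat)) :=
  [seq (m, m, q) | q <- Iset m m m] ++ [seq (m, m.+1, q) | q <- Iset m m m.+1] ++
  [seq (m.+1, m, q) | q <- Iset m m.+1 m] ++ [seq (m.+1, m.+1, q) | q <- Iset m m.+1 m.+1].

Lemma fam_E : centralizer_family m = map E keys.
Proof.
rewrite /centralizer_family /keys !map_cat -!map_comp.
by congr (_ ++ _ ++ _ ++ _); apply: eq_map => q; rewrite /= /Mmat /Rmat /Lmat /Fmat Emat_E.
Qed.

Lemma uniq_cat_sep (T : eqType) (f : pred T) (s1 s2 : seq T) :
  uniq s1 -> uniq s2 -> all f s1 -> all (predC f) s2 -> uniq (s1 ++ s2).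
Proof.
move=> u1 u2 a1 a2; rewrite cat_uniq u1 u2 andbT /=; apply/hasPn => x hx.
apply/negP => hx1; move/allP: a2 => /(_ x hx) /=; by move/allP: a1 => /(_ x hx1) ->.
Qed.

Lemma uniq_keys : uniq keys.
Proof.
have e1 : (m.+1 == m) = false by apply: gtn_eqF.
have e2 : (m == m.+1) = false by apply: ltn_eqF.
have ui : forall a b, uniq [seq (a, b, q) | q <- Iset m a b].
  by move=> a b; rewrite map_inj_uniq ?undup_uniq // => q1 q2 [].
rewrite /keys.
apply: (@uniq_cat_sep _ (fun k => (k.1.1 == m) && (k.1.2 == m))); rewrite ?ui //.
- apply: (@uniq_cat_sep _ (fun k => (k.1.1 == m) && (k.1.2 == m.+1))); rewrite ?ui //.
  + apply: (@uniq_cat_sep _ (fun k => (k.1.1 == m.+1) && (k.1.2 == m))); rewrite ?ui //.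
    * by rewrite all_map; apply/allP => q _ /=; rewrite ?eqxx ?e1 ?e2.
    * by rewrite all_map; apply/allP => q _ /=; rewrite ?eqxx ?e1 ?e2.
  + by rewrite all_map; apply/allP => q _ /=; rewrite ?eqxx ?e1 ?e2.
  + by rewrite !all_cat !all_map; (repeat (apply/andP; split)); apply/allP => q _ /=; rewrite ?eqxx ?e1 ?e2.
- by rewrite all_map; apply/allP => q _ /=; rewrite ?eqxx ?e1 ?e2.
- by rewrite !all_cat !all_map; (repeat (apply/andP; split)); apply/allP => q _ /=; rewrite ?eqxx ?e1 ?e2.
Qed.

Lemma key_in yz : key yz \in keys.
Proof.
case: yz => [[y hy] [z hz]]; rewrite /key /=.
have hq : forall a b, #|y| = a -> #|z| = b -> rho y z \in Iset m a b.
  by move=> a b ha hb; apply/IsetP; exists y, z.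
rewrite /keys !mem_cat.
case/orP: hy => /eqP hy; case/orP: hz => /eqP hz; rewrite hy hz.
- by rewrite map_f ?hq.
- by rewrite map_f ?hq ?orbT.
- by rewrite map_f ?hq ?orbT.
- by rewrite map_f ?hq ?orbT.
Qed.

Lemma key_real k : k \in keys -> exists yz, key yz = k.
Proof.
have gen : forall a b q, (a == m) || (a == m.+1) -> (b == m) || (b == m.+1) ->
    q \in Iset m a b -> exists yz, key yz = (a, b, q).
  move=> a b q ha hb /IsetP [y [z [hy hz hr]]].
  have hy' : (#|y| == m) || (#|y| == m.+1) by rewrite hy.
  have hz' : (#|z| == m) || (#|z| == m.+1) by rewrite hz.
  by exists (exist _ y hy', exist _ z hz'); rewrite /key /= hy hz hr.
rewrite /keys !mem_cat => /or4P [] /mapP [q hq ->]; apply: gen => //;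
  by rewrite eqxx ?orbT.
Qed.

Lemma rho_perm (s : {perm 'I_(2 * m + 1)}) (y z : {set 'I_(2 * m + 1)}) :
  s @: x0 m = x0 m -> rho (s @: y) (s @: z) = rho y z.
Proof.
move=> hx.
have eI : forall A B : {set 'I_(2 * m + 1)}, s @: A :&: s @: B = s @: (A :&: B).
  by move=> A B; rewrite imsetI // => a b _ _; exact: perm_inj.
rewrite /rho -{1 2 3}hx !eI !card_imset //; exact: perm_inj.
Qed.

Lemma key_G s (hs : s \in G m) (yz yz' : X m * X m) :
  val yz'.1 = s @: val yz.1 -> val yz'.2 = s @: val yz.2 -> key yz' = key yz.
Proof.
move=> h1 h2; rewrite /key h1 h2 !card_imset; try exact: perm_inj.
by rewrite rho_perm //; move: hs; rewrite inE => /eqP.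
Qed.

Lemma key_trans (yz yz' : X m * X m) : key yz = key yz' ->
  exists2 s, s \in G m & val yz'.1 = s @: val yz.1 /\ val yz'.2 = s @: val yz.2.
Proof.
rewrite /key /rho => -[e1 e2 e3 e4 e5 e6].
have [s [hx hy hz]] := orbit_trans e1 e2 e3 e4 e5 e6.
by exists s; [rewrite inE hx | split].
Qed.

Lemma ffunZ' (c : algC) (F : XMat m) x : (c *: F) x = c * F x.
Proof. by rewrite /GRing.scale /= /ffun_scale ffunE. Qed.

End Lin.
Import GRing.Theory.
Local Open Scope ring_scope.

Theorem theorem3p4 (m : nat) (hm : (1 <= m)%N) :
  exists A : {vspace XMat m},
    (forall B : XMat m, B \in A <-> in_centralizer B) /\
    basis_of A (centralizer_family m) /\
    \dim A = (4 * 'C(m + 4, 4))%N.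
Proof.
set fam := centralizer_family m.
have hfE : fam = map (@E m) (keys m) := fam_E m.
pose d : nat * nat * (nat * nat * nat * nat) := (0, 0, (0, 0, 0, 0))%N.
have hsz : size fam = size (keys m) by rewrite hfE size_map.
have hnth : forall j, (j < size fam)%N -> fam`_j = E m (nth d (keys m) j).
  by move=> j hj; rewrite hfE (nth_map d) // -hsz.
have hfree : free fam.
  apply/(@freeP _ _ _ (in_tuple fam)) => k hk i.
  have hi : (i < size (keys m))%N by rewrite -hsz.
  have [yz hyz] := key_real (mem_nth d hi).
  have := congr1 (fun F : XMat m => F yz) hk; rewrite sum_ffunE ffunE /=.
  rewrite (bigD1 i) //= big1 ?addr0; last first.
    move=> j hj; rewrite ffunZ' hnth // ffunE hyz nth_uniq ?uniq_keys -?hsz //.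
    by rewrite (_ : (i == j :> nat) = false) ?mulr0 //; apply/negbTE; rewrite eq_sym; exact: hj.
  by rewrite ffunZ' hnth // ffunE hyz; case: eqP => [_|//]; rewrite mulr1.
exists <<fam>>%VS; split; [|split].
- move=> B; split.
  + move=> hB s hs y z y' z' h1 h2.
    have e := @coord_span _ _ _ (in_tuple fam) B hB.
    rewrite e !sum_ffunE; apply: eq_bigr => i _; rewrite !ffunZ'; congr (_ * _).
    rewrite /= hnth // !ffunE.
    by rewrite (@key_G m s hs (y, z) (y', z')).
  + move=> hB.
    pose c k := if [pick yz | key yz == k] is Some yz then B yz else 0.
    have -> : B = \sum_(k <- keys m) c k *: E m k.
      apply/ffunP => yz; rewrite sum_ffunE (bigD1_seq (key yz)) ?key_in ?uniq_keys //=.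
      rewrite big1 => [|k hk]; last by rewrite ffunZ' ffunE eq_sym (negbTE hk) mulr0.
      rewrite addr0 ffunZ' ffunE; case: eqP => [_|//]; rewrite mulr1 /c.
      case: pickP => [yz1 /eqP h1 | h]; last by have := h yz; case: eqP.
      have [s hs [e1 e2]] := key_trans (esym h1).
      have := hB s hs _ _ _ _ e1 e2.
      by rewrite -!surjective_pairing.
    rewrite big_seq; apply: memv_suml => k hk; rewrite memvZ // memv_span // hfE map_f //.
- by rewrite /basis_of eqxx hfree.
- have /eqP -> := hfree.
  rewrite hsz /keys !size_cat !size_map !addnA; exact: sizes.
Qed.
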